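(* Assume $\operatorname{rk}L=2$ and $\omega$ non-degenerate. Let $u\in L$ be primitive and let $W,W'\in\mathcal Q[L^*]$ be Laurent polynomials with $W=\mu_u^*(W')$. Then $W\in\mathbb Z[L^*]$ if and only if $W'\in\mathbb Z[L^*]$.
   Context: $L$ is a lattice with skew-symmetric integral bilinear form $\omega$, $L^*=\mathrm{Hom}(L,\mathbb Z)$, $(\cdot,\cdot)$ the canonical pairing. $\mathcal Q=\mathbb Q(e^{2\pi i\mathbb Q})$ is $\mathbb Q$ with all roots of unity adjoined; $\mathcal Q[L^*]$ (resp. $\mathbb Z[L^*]$) is the group algebra of $L^*$ over $\mathcal Q$ (resp. $\mathbb Z$) with monomials $X^m$, and $\mathbb K_L$ is the fraction field of $\mathcal Q[L^*]$. For $v\in L$, $\mu_v^*$ is the $\mathcal Q$-algebra automorphism of $\mathbb K_L$ with $\mu_v^*(X^m)=X^m(1+X^{\omega(\cdot,v)})^{-(m,v)}$, where $\omega(\cdot,v)\in L^*$ is $w\mapsto\omega(w,v)$. A vector is primitive if nonzero and not a multiple $kw$, $k>1$. *)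

(* Defs.v *)
From HB Require Import structures.
From mathcomp Require Import all_boot all_order all_algebra all_field.
Set Implicit Arguments. Unset Strict Implicit. Unset Printing Implicit Defensive.
Import Order.TTheory GRing.Theory Num.Theory.
Local Open Scope ring_scope.

(* The lattice L (rank 2) is identified with Z^2 = int * int, and its dual
   L^* = Hom(L,Z) with Z^2 via values on the standard basis; the canonical
   pairing (m, v) is then the dot product. *)
Definition pairing (m v : int * int) : int := m.1 * v.1 + m.2 * v.2.
Definition ladd (v w : int * int) : int * int := (v.1 + w.1, v.2 + w.2).
Definition lscale (k : int) (v : int * int) : int * int := (k * v.1, k * v.2).

Definition primitive (u : int * int) : Prop :=
  u <> (0, 0) /\ forall (k : int) (w : int * int), 1 < k -> u <> lscale k w.

(* The field Q = Q(e^{2 pi i Q}) as the subfield of algC generated over Q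
   by all roots of unity: x lies in Q(zeta_n) for some n > 0. *)
Definition in_cyclo (x : algC) : Prop :=
  exists (n : nat) (z : algC) (p : {poly rat}),
    (0 < n)%N /\ n.-primitive_root z /\ x = (map_poly ratr p).[z].

(* The fraction field K_L (we take the fraction field of C-bar[x1,x2] with
   C-bar = algebraic complex numbers, which contains Frac(Q[L^*])). *)
Definition KL := {fraction {poly {poly algC}}}.
Definition toK (p : {poly {poly algC}}) : KL := @FracField.tofrac _ p.
Definition cst (c : algC) : KL := toK (c%:P%:P).
Definition x1 : KL := toK 'X.
Definition x2 : KL := toK ((('X : {poly algC}))%:P).

Definition mono (m : int * int) : KL := x1 ^ m.1 * x2 ^ m.2.

Definition laur (s : seq ((int * int) * algC)) : KL :=
  \sum_(t <- s) cst t.2 * mono t.1.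

Definition coeffs_cyclo (s : seq ((int * int) * algC)) : Prop :=
  forall t, t \in s -> in_cyclo t.2.

Definition in_ZL (f : KL) : Prop :=
  exists t : seq ((int * int) * int),
    f = \sum_(p <- t) (p.2)%:~R * mono p.1.

Definition omega_dual (omega : int * int -> int * int -> int) (v : int * int)
  : int * int := (omega (1, 0) v, omega (0, 1) v).

Definition mu_mono (omega : int * int -> int * int -> int) (v m : int * int)
  : KL := mono m * (1 + mono (omega_dual omega v)) ^ (- pairing m v).

(* mu_v^* applied to a Laurent polynomial (Q-algebra automorphism, hence
   determined by its values on monomials and Q-linearity) *)
Definition mu (omega : int * int -> int * int -> int) (v : int * int)
  (s : seq ((int * int) * algC)) : KL :=
  \sum_(t <- s) cst t.2 * mu_mono omega v t.1.

(* Main.v *)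
Require Import Defs.
From HB Require Import structures.
From mathcomp Require Import all_boot all_order all_algebra all_field.
From mathcomp Require Import zify ring lra.
Import Order.TTheory GRing.Theory Num.Theory.
Local Open Scope ring_scope.

Definition coef (s : seq ((int * int) * algC)) (m : int * int) : algC :=
  \sum_(t <- s) (if t.1 == m then t.2 else 0).

Fixpoint mulY1 (a : int * int) (s : seq ((int * int) * algC)) :=
  match s with
  | [::] => [::]
  | t :: s' => (t.1, t.2) :: (ladd t.1 a, t.2) :: mulY1 a s'
  end.

Fixpoint mulY (a : int * int) (k : nat) s :=
  match k with 0%N => s | k'.+1 => mulY1 a (mulY a k' s) end.

Definition integral s := forall m, coef s m \is a Num.int.

Lemma coef_nil m : coef [::] m = 0.
Proof. by rewrite /coef big_nil. Qed.

Lemma coef_cons t s m : coef (t :: s) m = (if t.1 == m then t.2 else 0) + coef s m.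
Proof. by rewrite /coef big_cons. Qed.

Lemma coef_cat s1 s2 m : coef (s1 ++ s2) m = coef s1 m + coef s2 m.
Proof. by rewrite /coef big_cat. Qed.

Lemma coef_notin s m : (forall t, t \in s -> t.1 != m) -> coef s m = 0.
Proof.
elim: s => [|t s IH] H; first by rewrite coef_nil.
rewrite coef_cons IH; last by move=> t' Ht'; apply: H; rewrite inE Ht' orbT.
by rewrite (negbTE (H t _)) ?addr0 // inE eqxx.
Qed.

Lemma ladd_inj a m m' : (ladd m a == ladd m' a) = (m == m').
Proof.
case: m m' => [m1 m2] [m1' m2']; rewrite /ladd /= !xpair_eqE.
by rewrite !(inj_eq (addIr _)).
Qed.

Lemma coef_mulY1 a s m :
  coef (mulY1 a s) (ladd m a) = coef s (ladd m a) + coef s m.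
Proof.
elim: s => [|t s IH] /=; first by rewrite !coef_nil addr0.
rewrite !coef_cons IH /= ladd_inj; ring.
Qed.

Lemma mulY1_cat a s1 s2 : mulY1 a (s1 ++ s2) = mulY1 a s1 ++ mulY1 a s2.
Proof. by elim: s1 => //= t s IH; rewrite IH. Qed.

Lemma mulY_cat a k s1 s2 : mulY a k (s1 ++ s2) = mulY a k s1 ++ mulY a k s2.
Proof. by elim: k => //= k IH; rewrite IH mulY1_cat. Qed.

Lemma mulY_nil a k : mulY a k [::] = [::].
Proof. by elim: k => //= k ->. Qed.

Definition lsub (m a : int * int) := (m.1 - a.1, m.2 - a.2).

Lemma ladd_lsub m a : ladd (lsub m a) a = m.
Proof. by case: m => m1 m2; rewrite /ladd /lsub /= !subrK. Qed.

Lemma integral_mulY1 a s : integral s -> integral (mulY1 a s).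
Proof.
move=> H m; rewrite -(ladd_lsub m a) coef_mulY1.
by apply: rpredD; apply: H.
Qed.

Lemma integral_mulY a k s : integral s -> integral (mulY a k s).
Proof. by elim: k => //= k IH H; apply: integral_mulY1; apply: IH. Qed.

Lemma exL (f : int * int -> int) (s : seq ((int * int) * algC)) : exists L, forall t, t \in s -> L < f t.1.
Proof.
elim: s => [|t s [L HL]]; first by exists 0.
exists (Num.min L (f t.1 - 1)) => t'; rewrite inE => /orP [/eqP -> | Ht'].
  by rewrite gt_min; apply/orP; right; rewrite ltrBlDr ltrDl.
by rewrite gt_min HL.
Qed.

Lemma aux1 (p L : int) : p - L <= 0 -> L < p -> False.
Proof. lia. Qed.
Lemma aux2 (p L : int) : p <= L -> L < p -> False.
Proof. lia. Qed.
Lemma aux3 (p L q : int) (k : nat) : p - L <= k.+1%:Z -> 0 < q -> p - q - L <= k%:Z.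
Proof. lia. Qed.

Lemma integral_mulY1_inv a s : a != (0, 0) -> integral (mulY1 a s) -> integral s.
Proof.
move=> Ha H.
have [L HL] := exL (fun m => a.1 * m.1 + a.2 * m.2) s.
have pa : 0 < a.1 * a.1 + a.2 * a.2.
  clear H HL; case: a Ha => a1 a2; rewrite /= xpair_eqE negb_and => Ha.
  case/orP: Ha => Ha; nia.
suff K : forall k : nat, forall m, a.1 * m.1 + a.2 * m.2 - L <= k%:Z ->
    coef s m \is a Num.int.
  move=> m; apply: (K (absz (a.1 * m.1 + a.2 * m.2 - L)%R)); by rewrite abszE ler_norm.
elim=> [|k IH] m Hm.
  rewrite coef_notin ?rpred0 // => t Ht; apply/eqP => E.
  by have := HL t Ht; rewrite E; apply: aux1.
have [Hle|Hgt] := lerP (a.1 * m.1 + a.2 * m.2) L.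
  rewrite coef_notin ?rpred0 // => t Ht; apply/eqP => E.
  by have := HL t Ht; rewrite E; apply: aux2.
have E : coef s m = coef (mulY1 a s) m - coef s (lsub m a).
  by rewrite -{1 2}(ladd_lsub m a) coef_mulY1 addrK.
rewrite E; apply: rpredB; first exact: H.
apply: IH; move: Hm pa; case: m {Hgt E} => m1 m2; case: a {Ha H HL} => a1 a2 /=.
move=> Hm pa.
have -> : a1 * (m1 - a1) + a2 * (m2 - a2) = a1 * m1 + a2 * m2 - (a1 * a1 + a2 * a2) by ring.
exact: aux3.
Qed.

Lemma integral_mulY_inv a k s : a != (0, 0) -> integral (mulY a k s) -> integral s.
Proof.
move=> Ha; elim: k => //= k IH H; apply: IH; exact: integral_mulY1_inv H.
Qed.

Lemma x1_unit : x1 \is a GRing.unit.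
Proof. by rewrite unitfE /x1 /toK tofrac_eq0 polyX_eq0. Qed.

Lemma x2_unit : x2 \is a GRing.unit.
Proof. by rewrite unitfE /x2 /toK tofrac_eq0 polyC_eq0 polyX_eq0. Qed.

Lemma mono_add m n : mono (ladd m n) = mono m * mono n.
Proof.
rewrite /mono /ladd /= (exprzDr x1_unit) (exprzDr x2_unit); ring.
Qed.

Lemma mono0 : mono (0, 0) = 1.
Proof. by rewrite /mono /= !expr0z mulr1. Qed.

Lemma absz_eq (x y : int) : 0 <= x -> 0 <= y -> (absz x == absz y) = (x == y).
Proof. by move=> hx hy; apply/eqP/eqP; lia. Qed.

Lemma posz_absz (x : int) : 0 <= x -> Posz (absz x) = x.
Proof. by move=> hx; lia. Qed.

Definition term (N : nat) (t : (int * int) * algC) : {poly {poly algC}} :=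
  (t.2%:P * 'X^(absz (t.1.2 + N%:Z)%R))%:P * 'X^(absz (t.1.1 + N%:Z)%R).

Lemma toK_term N t : 0 <= t.1.1 + N%:Z -> 0 <= t.1.2 + N%:Z ->
  toK (term N t) = cst t.2 * mono t.1 * (x1 ^+ N * x2 ^+ N).
Proof.
move=> h1 h2.
rewrite /term /toK /cst /mono polyCM !tofracM.
have -> : tofrac ('X^(absz (t.1.1 + N%:Z)%R) : {poly {poly algC}}) = x1 ^ t.1.1 * x1 ^+ N.
  by rewrite rmorphXn /= exprnP exprnP -(exprzDr x1_unit) posz_absz.
have -> : tofrac (('X^(absz (t.1.2 + N%:Z)%R))%:P : {poly {poly algC}}) = x2 ^ t.1.2 * x2 ^+ N.
  by rewrite rmorphXn /= rmorphXn /= exprnP exprnP -(exprzDr x2_unit) posz_absz.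
rewrite /x1 /x2 /toK; ring.
Qed.

Lemma ifaux (A j : nat) (c : algC) :
  (if (j < A)%N then 0 else if (j - A == 0)%N then c else 0) = (if A == j then c else 0).
Proof.
case: (ltnP j A) => h.
  by have -> : (A == j) = false by apply/negP => /eqP; lia.
by have -> : (j - A == 0)%N = (A == j) by apply/idP/idP => /eqP e; apply/eqP; lia.
Qed.

Lemma coef_term N t i j : (term N t)`_i`_j =
  if (absz (t.1.1 + N%:Z)%R == i) && (absz (t.1.2 + N%:Z)%R == j) then t.2 else 0.
Proof.
rewrite /term coefMXn coefC.
case: ltnP => hi.
  have -> : (absz (t.1.1 + N%:Z)%R == i) = false by apply/negbTE; rewrite neq_ltn hi orbT.
  by rewrite coef0.
case: eqP => hi2.
  have -> : absz (t.1.1 + N%:Z)%R = i by lia.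
  by rewrite eqxx /= coefMXn coefC ifaux.
have -> : (absz (t.1.1 + N%:Z)%R == i) = false by apply/negP => /eqP; lia.
by rewrite coef0.
Qed.

Lemma absz_ge (x : int) : 0 <= x + (absz x)%:Z.
Proof. case: x => n /=; [lia | rewrite NegzE; lia]. Qed.

Lemma aux5 (x : int) (M : nat) : (absz x <= M)%N -> 0 <= x + M%:Z.
Proof. case: x => n /=; [lia | rewrite NegzE; lia]. Qed.

Lemma aux6 (x : int) (N M : nat) : 0 <= x + N%:Z -> (N <= M)%N -> 0 <= x + M%:Z.
Proof. lia. Qed.

Lemma exN (s : seq ((int * int) * algC)) :
  exists N : nat, forall t, t \in s -> 0 <= t.1.1 + N%:Z /\ 0 <= t.1.2 + N%:Z.
Proof.
elim: s => [|t s [N HN]]; first by exists 0%N.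
exists (N + absz t.1.1 + absz t.1.2)%N => t'; rewrite inE => /orP [/eqP -> | Ht'].
  by split; apply: aux5; [apply: leq_trans (leq_addl N _) _; apply: leq_addr | apply: leq_addl].
by have [h1 h2] := HN t' Ht'; split; apply: (aux6 _ N) => //; rewrite -addnA leq_addr.
Qed.

Lemma laur_eq0 s : laur s = 0 -> forall m, coef s m = 0.
Proof.
move=> H0 m.
have [N HN] := exN s.
pose P := \sum_(t <- s) term N t.
have HP : toK P = laur s * (x1 ^+ N * x2 ^+ N).
  rewrite /P /laur big_distrl /= /toK rmorph_sum /=.
  by apply: eq_big_seq => t Ht; have [h1 h2] := HN t Ht; rewrite -toK_term.
have P0 : P = 0 by apply/eqP; rewrite -(tofrac_eq0 (R := {poly {poly algC}})); apply/eqP; rewrite -/(toK P) HP H0 mul0r.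
have [/andP [h1 h2]|hn] := boolP ((0 <= m.1 + N%:Z) && (0 <= m.2 + N%:Z)).
  have := congr1 (fun p : {poly {poly algC}} => p`_(absz (m.1 + N%:Z)%R)`_(absz (m.2 + N%:Z)%R)) P0.
  rewrite /= coef0 coef0 /P coef_sum coef_sum /coef => E; apply: etrans E.
  apply: eq_big_seq => t Ht; rewrite coef_term.
  have [e1 e2] := HN t Ht.
  rewrite !absz_eq //.
  by rewrite !(inj_eq (addIr _)); case: (t.1) => a b; case: (m) => c d; rewrite xpair_eqE.
rewrite coef_notin // => t Ht; apply/eqP => E; move: hn; rewrite -E.
by have [-> ->] := HN t Ht.
Qed.

Lemma cstD a b : cst (a + b) = cst a + cst b.
Proof. by rewrite /cst /toK !rmorphD. Qed.
Lemma cstN a : cst (- a) = - cst a.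
Proof. by rewrite /cst /toK !rmorphN. Qed.
Lemma cst0 : cst 0 = 0.
Proof. by rewrite /cst /toK !rmorph0. Qed.
Lemma cst1 : cst 1 = 1.
Proof. by rewrite /cst /toK !rmorph1. Qed.
Lemma cst_int (z : int) : cst (z%:~R) = z%:~R.
Proof. by rewrite /cst /toK !rmorph_int. Qed.

Lemma laur_nil : laur [::] = 0.
Proof. by rewrite /laur big_nil. Qed.
Lemma laur_cons t s : laur (t :: s) = cst t.2 * mono t.1 + laur s.
Proof. by rewrite /laur big_cons. Qed.
Lemma laur_cat s1 s2 : laur (s1 ++ s2) = laur s1 + laur s2.
Proof. by rewrite /laur big_cat. Qed.

Definition negl (s : seq ((int * int) * algC)) := [seq (t.1, - t.2) | t <- s].

Lemma laur_negl s : laur (negl s) = - laur s.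
Proof.
elim: s => [|t s IH] /=; first by rewrite laur_nil oppr0.
by rewrite !laur_cons IH /= cstN opprD mulNr.
Qed.

Lemma coef_negl s m : coef (negl s) m = - coef s m.
Proof.
elim: s => [|t s IH] /=; first by rewrite !coef_nil oppr0.
by rewrite !coef_cons IH /= opprD; case: ifP; rewrite ?oppr0.
Qed.

Lemma coef_eq s1 s2 : laur s1 = laur s2 -> forall m, coef s1 m = coef s2 m.
Proof.
move=> E m; apply/eqP; rewrite -subr_eq0; apply/eqP.
rewrite -coef_negl -coef_cat; apply: laur_eq0.
by rewrite laur_cat laur_negl E subrr.
Qed.

Lemma laur_mulY1 a s : laur (mulY1 a s) = laur s * (1 + mono a).
Proof.
elim: s => [|t s IH] /=; first by rewrite laur_nil mul0r.
by rewrite !laur_cons IH /= mono_add; ring.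
Qed.

Lemma laur_mulY a k s : laur (mulY a k s) = laur s * (1 + mono a) ^+ k.
Proof.
elim: k => [|k IH] /=; first by rewrite expr0 mulr1.
by rewrite laur_mulY1 IH exprS; ring.
Qed.

Lemma sum_pick (r : seq (int * int)) x (F : int * int -> KL) :
  uniq r -> x \in r -> \sum_(m <- r) (if x == m then F m else 0) = F x.
Proof.
move=> ur xr; rewrite (bigD1_seq x) //= eqxx big1 ?addr0 // => m /negbTE.
by rewrite eq_sym => ->.
Qed.

Lemma laur_repr (s : seq ((int * int) * algC)) (r : seq (int * int)) : uniq r -> {subset map fst s <= r} ->
  laur s = \sum_(m <- r) cst (coef s m) * mono m.
Proof.
move=> ur; elim: s => [|t s IH] sub.
  by rewrite laur_nil big1 // => m _; rewrite coef_nil cst0 mul0r.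
rewrite laur_cons IH; last by move=> x xs; apply: sub; rewrite /= inE xs orbT.
under [in RHS]eq_bigr => m _ do rewrite coef_cons cstD mulrDl.
rewrite big_split /=; congr (_ + _).
rewrite -(@sum_pick r t.1 (fun m => cst t.2 * mono m) ur); last by apply: sub; rewrite /= inE eqxx.
by apply: eq_bigr => m _; case: ifP; rewrite ?cst0 ?mul0r.
Qed.

Lemma in_ZL_integral s : in_ZL (laur s) <-> integral s.
Proof.
split.
  move=> [t Ht].
  pose s' := [seq (p.1, (p.2%:~R : algC)) | p <- t].
  have E : laur s = laur s'.
    rewrite Ht /laur /s' big_map; apply: eq_bigr => p _ /=; by rewrite cst_int.
  move=> m; rewrite (@coef_eq _ _ E m) /coef /s' big_map; apply: rpred_sum => p _ /=.
  by case: ifP => _; rewrite ?rpred0 ?intr_int.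
move=> H.
exists [seq (m, Num.floor (coef s m)) | m <- undup (map fst s)].
rewrite (@laur_repr s (undup (map fst s))) ?undup_uniq //; last by move=> x; rewrite mem_undup.
rewrite big_map; apply: eq_bigr => m _ /=.
by rewrite -cst_int floorK //; apply: H.
Qed.

Lemma addfun_int (h : int -> int) : (forall x y, h (x + y) = h x + h y) ->
  forall x, h x = x * h 1.
Proof.
move=> hD.
have h0 : h 0 = 0.
  have := hD 0 0; rewrite addr0 => E; lia.
have hn : forall n : nat, h n%:Z = n%:Z * h 1.
  elim=> [|n IH]; first by rewrite h0 mul0r.
  by rewrite -addn1 PoszD hD IH mulrDl mul1r.
case=> n; first exact: hn.
have hN : forall x, h (- x) = - h x.
  by move=> x; apply/eqP; rewrite -addr_eq0 -hD addNr h0.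
by rewrite NegzE hN hn mulNr.
Qed.

Lemma addfun2 (f : int * int -> int) : (forall v w, f (ladd v w) = f v + f w) ->
  forall x y, f (x, y) = x * f (1, 0) + y * f (0, 1).
Proof.
move=> fD x y.
have -> : (x, y) = ladd (x, 0) (0, y) by rewrite /ladd /= addr0 add0r.
rewrite fD; congr (_ + _).
  by apply: (addfun_int (fun x => f (x, 0))) => a b; rewrite -fD /ladd /= addr0.
by apply: (addfun_int (fun x => f (0, x))) => a b; rewrite -fD /ladd /= addr0.
Qed.

Definition pj (u : int * int) (j : int) := fun t : (int * int) * algC => pairing t.1 u == j.

Arguments pj : simpl never.

Lemma coef_filter u j s m :
  coef (filter (pj u j) s) m = if pairing m u == j then coef s m else 0.
Proof.
elim: s => [|t s IH] /=; first by rewrite coef_nil; case: ifP.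
rewrite /pj; case: ifP => ht; rewrite ?coef_cons IH;
  case: (pairing m u =P j) => hm; case: (t.1 =P m) => e //=; rewrite ?addr0 ?add0r //.
- by case: hm; move/eqP: ht; rewrite e.
- by move: ht; rewrite e hm eqxx.
Qed.

Lemma pairing_ladd m a u : pairing (ladd m a) u = pairing m u + pairing a u.
Proof. rewrite /pairing /ladd /=; ring. Qed.

Lemma filter_mulY1 u a j s : pairing a u = 0 ->
  filter (pj u j) (mulY1 a s) = mulY1 a (filter (pj u j) s).
Proof.
move=> pa; elim: s => [|t s IH] //=.
case: t => m c /=.
have -> : pj u j (ladd m a, c) = pj u j (m, c) by rewrite /pj /= pairing_ladd pa addr0.
by case: (pj u j (m, c)); rewrite /= IH.
Qed.

Lemma filter_mulY u a j k s : pairing a u = 0 ->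
  filter (pj u j) (mulY a k s) = mulY a k (filter (pj u j) s).
Proof. by move=> pa; elim: k => //= k IH; rewrite filter_mulY1 // IH. Qed.

Fixpoint Rlist (a u : int * int) (N : nat) (s : seq ((int * int) * algC)) :=
  match s with
  | [::] => [::]
  | t :: s' => mulY a (absz (N%:Z - pairing t.1 u)%R) [:: t] ++ Rlist a u N s'
  end.

Lemma filter_Rlist a u N j s : pairing a u = 0 ->
  filter (pj u j) (Rlist a u N s) = mulY a (absz (N%:Z - j)%R) (filter (pj u j) s).
Proof.
move=> pa; elim: s => [|t s IH] /=; first by rewrite mulY_nil.
rewrite filter_cat filter_mulY // IH /=.
case: ifP => ht; last by rewrite mulY_nil.
have e : pairing t.1 u = j by apply/eqP.
by rewrite e -mulY_cat.
Qed.

Lemma laur_Rlist omega u N s :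
  let a := omega_dual omega u in
  (1 + mono a) \is a GRing.unit ->
  (forall t, t \in s -> pairing t.1 u <= N%:Z) ->
  laur (Rlist a u N s) = mu omega u s * (1 + mono a) ^+ N.
Proof.
move=> a ua; elim: s => [|t s IH] H /=.
  by rewrite laur_nil /mu big_nil mul0r.
rewrite laur_cat laur_mulY IH; last by move=> t' ht'; apply: H; rewrite inE ht' orbT.
rewrite /mu big_cons mulrDl; congr (_ + _).
rewrite laur_cons laur_nil addr0 /mu_mono -/a.
have hp := H t (mem_head _ _).
rewrite !exprnP -!mulrA -(exprzDr ua) posz_absz; last by rewrite subr_ge0.
by rewrite [(- _ + _)%R]addrC.
Qed.

Lemma aux7 (p L : int) : L < - p -> p <= (absz L)%:Z.
Proof. case: L => n /=; [lia | rewrite NegzE; lia]. Qed.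

Lemma aux8 (x : int) : x = - x -> x = 0.
Proof. lia. Qed.

Lemma integral_filter u s : integral s <-> forall j, integral (filter (pj u j) s).
Proof.
split.
  by move=> H j m; rewrite coef_filter; case: ifP => _; rewrite ?rpred0 ?H.
move=> H m; have := H (pairing m u) m; by rewrite coef_filter eqxx.
Qed.

Lemma integral_ext s1 s2 : (forall m, coef s1 m = coef s2 m) ->
  integral s1 <-> integral s2.
Proof. by move=> E; split => H m; [rewrite -E | rewrite E]. Qed.

Theorem mainTheorem11
  (omega : int * int -> int * int -> int)
  (omega_addl : forall v v' w, omega (ladd v v') w = omega v w + omega v' w)
  (omega_addr : forall v w w', omega v (ladd w w') = omega v w + omega v w')
  (omega_skew : forall v w, omega v w = - omega w v)
  (omega_nondeg : forall v, (forall w, omega v w = 0) -> v = (0, 0))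
  (u : int * int) (u_prim : primitive u)
  (W W' : seq ((int * int) * algC))
  (HW : coeffs_cyclo W) (HW' : coeffs_cyclo W')
  (Hmu : laur W = mu omega u W') :
  in_ZL (laur W) <-> in_ZL (laur W').
Proof.
pose a := omega_dual omega u.
have lin : forall x y, omega (x, y) u = x * a.1 + y * a.2.
  by move=> x y; apply: (addfun2 (fun v => omega v u)) => v w; apply: omega_addl.
have pa : pairing a u = 0.
  have lu := lin u.1 u.2; rewrite -surjective_pairing in lu.
  have E := omega_skew u u.
  have -> : pairing a u = omega u u by rewrite lu /pairing; ring.
  by apply: aux8.
have anz : a != (0, 0).
  apply/negP => /eqP a0; case: u_prim => unz _; apply: unz; apply: omega_nondeg.
  move=> [x y]; rewrite omega_skew lin a0 /=; lia.
have ua : (1 + mono a) \is a GRing.unit.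
  rewrite unitfE; apply/negP => /eqP E.
  have L : laur [:: ((0, 0), 1); (a, 1)] = 0.
    by rewrite !laur_cons laur_nil /= cst1 !mul1r mono0 addr0.
  have := @laur_eq0 _ L (0, 0).
  rewrite !coef_cons coef_nil /= (negbTE anz) !addr0 => /eqP; rewrite oner_eq0.
  done.
have [L HL] := exL (fun m => - pairing m u) W'.
pose N := absz L.
have HN : forall t, t \in W' -> pairing t.1 u <= N%:Z.
  by move=> t ht; apply: aux7; apply: HL.
have E0 : forall m, coef (mulY a N W) m = coef (Rlist a u N W') m.
  apply: coef_eq; rewrite laur_mulY Hmu laur_Rlist //.
have Ej : forall j m, coef (mulY a N (filter (pj u j) W)) m =
    coef (mulY a (absz (N%:Z - j)%R) (filter (pj u j) W')) m.
  move=> j m; rewrite -filter_mulY // -filter_Rlist // !coef_filter E0 //.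
rewrite !in_ZL_integral (integral_filter u W) (integral_filter u W').
split => H j.
  apply: (@integral_mulY_inv a (absz (N%:Z - j)%R) _ anz).
  rewrite -(@integral_ext _ _ (Ej j)); apply: integral_mulY; exact: H.
apply: (@integral_mulY_inv a (N) _ anz).
rewrite (@integral_ext _ _ (Ej j)); apply: integral_mulY; exact: H.
Qed.
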